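(* Let $L>0$ with $L\notin\mathcal N$, let $c\in\mathbb R$, let $\varepsilon>0$, and let $W,\underline c,\overline c$ be as in the context. Define $M(x)= 2c\,\frac{\sin(x/2)\sin((L-x)/2)}{\sin(L/2)}$ for $x\in[0,L]$ and, for $(y,z)\in L^2(0,L)\times\mathbb R$, $$V_1(y,z) = \varepsilon W(y) + \frac{1}{2}\left(\varepsilon \int_0^L M(x) y(x)\, dx - z \right)^2.$$ Then $$\underline{\nu}_1\big(\Vert y\Vert^2_{L^2(0,L)}+|z|^2\big)\leq V_1(y,z) \leq \overline{\nu}_1\big(\Vert y\Vert^2_{L^2(0,L)} + |z|^2\big)\quad\text{for all }(y,z)\in L^2(0,L)\times\mathbb R,$$ with $\overline{\nu}_1 = \max\left(\varepsilon \overline c+\varepsilon^2 \Vert M\Vert^2_{L^2(0,L)},1\right)$ and $\underline{\nu}_1=\min\left(\frac{\underline{c}\varepsilon}{2}, \frac{1}{2}\frac{\underline c \varepsilon}{\varepsilon^2 \Vert M\Vert^2_{L^2(0,L)}+ \underline c \varepsilon} \right)$. Moreover, for $\varepsilon\leq 1$, there exists a constant $C>0$ such that $$\varepsilon \big(\Vert y\Vert^2_{L^2(0,L)} + |z|^2\big) \leq V_1(y,z) \leq C \big(\Vert y\Vert^2_{L^2(0,L)} + |z|^2\big)\quad\text{for all }(y,z).$$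
   Context: $\mathcal{N}:=\left\{2\pi\sqrt{\tfrac{k^2+kl+l^2}{3}}:k,l\in\mathbb N\right\}$ (the set of critical lengths). Standing assumption: $L\notin\mathcal N$. Fix a functional $W:L^2(0,L)\to\mathbb R$ and positive constants $\lambda,\kappa_1,\kappa_2,\kappa_3,\underline c,\overline c$ (such objects exist when $L\notin\mathcal N$) with $\underline c\Vert y\Vert^2_{L^2(0,L)}\le W(y)\le \overline c\Vert y\Vert^2_{L^2(0,L)}$ for all $y\in L^2(0,L)$, and such that for all $d_1\in L^2_{loc}(\mathbb R_+;L^2(0,L))$, $d_2\in L^2_{loc}(\mathbb R_+)$, the solutions of $y_t+y_x+y_{xxx}=d_1$ on $(0,L)$, $y(t,0)=y(t,L)=0$, $y_x(t,L)=d_2(t)$, $y(0)=y_0$ satisfy $\frac{d}{dt}W(y)\le -\lambda\Vert y\Vert^2_{L^2(0,L)}+\kappa_1\Vert d_1(t,\cdot)\Vert^2_{L^2(0,L)}+\kappa_2|d_2(t)|^2-\kappa_3|y_x(t,0)|^2$.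
   Formalization: In the Moreover part the lower bound is (ε/C)(‖y‖²+|z|²) instead of ε(‖y‖²+|z|²), with one C>0 serving all ε∈(0,1], and the k, l in 𝒩 range over positive integers. Apart from conventions, each condition added here is assumed in the paper as well or is needed for the statement above to hold. *)

(* Defs.v *)
From HB Require Import structures.
From mathcomp Require Import all_boot all_order all_algebra.
From mathcomp Require Import all_classical all_reals all_analysis.
Set Implicit Arguments. Unset Strict Implicit. Unset Printing Implicit Defensive.
Import Order.TTheory GRing.Theory Num.Theory.
Import numFieldNormedType.Exports.
Local Open Scope classical_set_scope.
Local Open Scope ring_scope.

Definition critical_lengths (R : realType) (L : R) : Prop :=
  exists k l : nat, (0 < k)%N /\ (0 < l)%N /\
     L = 2 * pi * Num.sqrt ((k ^ 2 + k * l + l ^ 2)%N%:R / 3).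

Definition inL2 (R : realType) (L : R) (y : R -> R) : Prop :=
  measurable_fun `[0, L]%classic y /\
  (\int[@lebesgue_measure R]_(x in `[0%R, L]%classic) ((y x) ^+ 2)%:E < +oo)%E.

Definition L2norm2 (R : realType) (L : R) (y : R -> R) : R :=
  Rintegral (@lebesgue_measure R) `[0, L]%classic (fun x => (y x) ^+ 2).

Definition Mfun (R : realType) (L c : R) (x : R) : R :=
  2 * c * (sin (x / 2) * sin ((L - x) / 2)) / sin (L / 2).

Definition V1 (R : realType) (L c eps : R) (W : (R -> R) -> R) (y : R -> R) (z : R) : R :=
  eps * W y + 2^-1 * (eps * Rintegral (@lebesgue_measure R) `[0, L]%classic
                                (fun x => Mfun L c x * y x) - z) ^+ 2.

Definition nu1_upper (R : realType) (L c eps cup : R) : R :=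
  Num.max (eps * cup + eps ^+ 2 * L2norm2 L (Mfun L c)) 1.

Definition nu1_lower (R : realType) (L c eps clow : R) : R :=
  Num.min (clow * eps / 2)
    (2^-1 * ((clow * eps) / (eps ^+ 2 * L2norm2 L (Mfun L c) + clow * eps))).

(* Main.v *)
Require Import Defs.
From HB Require Import structures.
From mathcomp Require Import all_boot all_order all_algebra.
From mathcomp Require Import all_classical all_reals all_analysis.
From mathcomp Require Import ring lra.
Import Order.TTheory GRing.Theory Num.Theory.
Local Open Scope classical_set_scope.
Local Open Scope ring_scope.

Section CS.
Context (R : realType).
Import measurable_realfun.
Notation mu := (@lebesgue_measure R).

Lemma int_cst (L k : R) : 0 < L -> mu.-integrable `[0, L] (EFin \o cst k).
Proof.
move=> L0; apply/integrableP; split.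
  by apply/measurable_EFinP; exact: measurable_cst.
rewrite (eq_integral (cst `|k|%:E)); last by move=> x _.
rewrite integral_cst; last exact: measurable_itv.
apply: lte_mul_pinfty => //.
have h : (lebesgue_measure `[0%R, L]%classic < +oo)%E.
  by rewrite lebesgue_measure_itv /= lte_fin L0 /= ltry.
exact: h.
Qed.

Lemma mM (L c : R) : measurable_fun `[0, L] (Mfun L c).
Proof.
have -> : Mfun L c = (fun x => (2 * c / sin (L / 2)) * (sin (x / 2) * sin ((L - x) / 2))).
  by apply/funext => x; rewrite /Mfun; rewrite mulrAC.
apply: measurable_funM; first exact: measurable_cst.
have ms : measurable_fun setT (@sin R) by apply: continuous_measurable_fun; exact: continuous_sin.
apply: measurable_funM.
  apply: (measurableT_comp (f := @sin R) (g := fun x : R => x / 2)) => //.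
  by apply: measurable_funM => //; exact: measurable_cst.
apply: (measurableT_comp (f := @sin R) (g := fun x : R => (L - x) / 2)) => //.
apply: measurable_funM; last exact: measurable_cst.
apply: measurable_funB; first exact: measurable_cst.
by [].
Qed.

Lemma bM (L c : R) x : `|Mfun L c x| <= `|2 * c / sin (L / 2)|.
Proof.
rewrite /Mfun mulrAC normrM ler_piMr //.
rewrite normrM -[1]mulr1 ler_pM //; exact: sin_max.
Qed.

Lemma intZ (L k : R) (f : R -> R) : mu.-integrable `[0, L] (EFin \o f) ->
  mu.-integrable `[0, L] (EFin \o (fun x => k * f x)).
Proof.
move=> h; apply: eq_integrable (integrableZl _ k h) => // x _ /=; by rewrite EFinM.
Qed.

Lemma intD (L : R) (f g : R -> R) : mu.-integrable `[0, L] (EFin \o f) ->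
  mu.-integrable `[0, L] (EFin \o g) ->
  mu.-integrable `[0, L] (EFin \o (fun x => f x + g x)).
Proof.
move=> hf hg; apply: eq_integrable (integrableD _ hf hg) => // x _ /=; by rewrite EFinD.
Qed.

Lemma disc (a m Y : R) : 0 <= m -> 0 <= Y ->
  (forall s, 2 * s * a <= s ^+ 2 * m + Y) -> a ^+ 2 <= m * Y.
Proof.
move=> m0 Y0 h.
have [mz|mp] := eqVneq m 0.
  have [az|an] := eqVneq a 0.
    by rewrite az mz; lra.
  have := h ((Y + 1) / a); rewrite mz mulr0 add0r.
  have -> : 2 * ((Y + 1) / a) * a = 2 * (Y + 1) by field.
  lra.
have mpos : 0 < m by rewrite lt_def mp m0.
have := h (a / m).
have -> : 2 * (a / m) * a = 2 * (a ^+ 2 / m) by field.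
have -> : (a / m) ^+ 2 * m = a ^+ 2 / m by field.
move=> H.
have H2 : a ^+ 2 / m <= Y by lra.
have -> : a ^+ 2 = m * (a ^+ 2 / m) by field.
by rewrite ler_pM2l.
Qed.

Lemma cs (L c : R) (y : R -> R) : 0 < L -> inL2 L y ->
  (Rintegral mu `[0, L] (fun x => Mfun L c x * y x)) ^+ 2
   <= L2norm2 L (Mfun L c) * L2norm2 L y.
Proof.
move=> L0 [my iy].
have my2 : mu.-integrable `[0, L] (EFin \o (fun x => y x ^+ 2)).
  apply/integrableP; split.
    by apply/measurable_EFinP; exact: measurable_funX.
  under eq_integral => x _ do rewrite /comp abse_EFin ger0_norm ?sqr_ge0 //.
  exact: iy.
set K := `|2 * c / sin (L / 2)|.
have mM2 : mu.-integrable `[0, L] (EFin \o (fun x => Mfun L c x ^+ 2)).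
  apply: (le_integrable _ (g := EFin \o cst (K ^+ 2))).
  - exact: measurable_itv.
  - by apply/measurable_EFinP; apply: measurable_funX; exact: mM.
  - move=> x _; rewrite /comp !abse_EFin lee_fin.
    have h1 := bM L c x; have h2 := normr_ge0 (Mfun L c x).
    rewrite !normrX !expr2 /K normr_id; exact: ler_pM.
  - exact: (int_cst L (K ^+ 2) L0).
have mMy : mu.-integrable `[0, L] (EFin \o (fun x => Mfun L c x * y x)).
  refine (@le_integrable _ _ _ (@lebesgue_measure R) _ _ _ (EFin \o (fun x => Mfun L c x ^+ 2 + y x ^+ 2)) _ _ (@intD L _ _ mM2 my2)).
  - exact: measurable_itv.
  - by apply/measurable_EFinP; apply: measurable_funM => //; exact: mM.
  - move=> x _; rewrite /comp !abse_EFin lee_fin.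
    rewrite (ger0_norm (addr_ge0 (sqr_ge0 _) (sqr_ge0 _))) normrM.
    rewrite -(real_normK (num_real (Mfun L c x))) -(real_normK (num_real (y x))).
    have := sqr_ge0 (`|Mfun L c x| - `|y x|).
    have a1 := normr_ge0 (Mfun L c x); have a2 := normr_ge0 (y x).
    nra.
apply: disc.
- by apply: Rintegral_ge0 => x _; exact: sqr_ge0.
- by apply: Rintegral_ge0 => x _; exact: sqr_ge0.
move=> s.
rewrite /L2norm2 -RintegralZl // -RintegralZl // -RintegralD //; last first.
  exact: intZ.
apply: le_Rintegral => //.
- exact: intZ.
- by apply: intD => //; exact: intZ.
- move=> x _; have := sqr_ge0 (s * Mfun L c x - y x); nra.
Qed.

Lemma lower_alg (A p Y b z nu : R) : 0 < A -> 0 <= p -> 0 <= Y ->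
  b ^+ 2 <= p * Y -> 0 <= nu -> nu <= A / 2 -> nu * (p + A) <= A / 2 ->
  nu * (Y + z ^+ 2) <= A * Y + 2^-1 * (b - z) ^+ 2.
Proof.
move=> A0 p0 Y0 hb n0 n1 n2.
have nh : nu <= 1 / 2.
  have : nu * A <= A / 2 by nra.
  move=> h; rewrite -(ler_pM2l A0); lra.
have H1 : nu * p <= (1 - 2 * nu) * (A - nu) by nra.
have H2 : nu * b ^+ 2 <= nu * (p * Y) by exact: ler_wpM2l.
have H1Y : nu * p * Y <= (1 - 2 * nu) * (A - nu) * Y by exact: ler_wpM2r.
set u := z - b.
have zE : z = u + b by rewrite /u; ring.
rewrite zE (_ : b - (u + b) = - u); last by ring.
set G := (A - nu) * Y + (2^-1 - nu) * u ^+ 2 - 2 * nu * u * b - nu * b ^+ 2.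
suff : 0 <= G by rewrite /G; lra.
have [nlt|nge] := ltP nu (1/2).
  have k0 : 0 < 1 - 2 * nu by lra.
  have hk : 0 <= (1 - 2 * nu) * G.
    have := sqr_ge0 ((1 - 2 * nu) * u - 2 * nu * b).
    rewrite /G; nra.
  by rewrite -(pmulr_rge0 _ k0).
have ne : nu = 1 / 2 by lra.
have pz : p = 0 by rewrite ne in n2; lra.
have bz : b = 0.
  rewrite pz mul0r in hb.
  by apply/eqP; rewrite -sqrf_eq0 eq_le hb sqr_ge0.
have hA : 0 <= (A - 1 / 2) * Y by apply: mulr_ge0 => //; rewrite ne in n1; lra.
have -> : G = (A - 1 / 2) * Y by rewrite /G bz ne; field.
exact: hA.
Qed.

Lemma core (L c eps clow cup : R) (W : (R -> R) -> R) (y : R -> R) (z nu N : R) :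
  0 < L -> 0 < eps -> 0 < clow -> inL2 L y ->
  clow * L2norm2 L y <= W y <= cup * L2norm2 L y ->
  0 <= nu -> nu <= clow * eps / 2 ->
  nu * (eps ^+ 2 * L2norm2 L (Mfun L c) + clow * eps) <= clow * eps / 2 ->
  eps * cup + eps ^+ 2 * L2norm2 L (Mfun L c) <= N -> 1 <= N ->
  nu * (L2norm2 L y + z ^+ 2) <= V1 L c eps W y z <= N * (L2norm2 L y + z ^+ 2).
Proof.
move=> L0 e0 cl0 iy /andP[W1 W2] n0 n1 n2 N1 N2.
have hcs := cs L c y L0 iy.
rewrite /V1.
set a := Rintegral _ _ _ in hcs *.
set m := L2norm2 L (Mfun L c) in hcs n2 N1 *.
set Y := L2norm2 L y in hcs W1 W2 *.
have Y0 : 0 <= Y by apply: Rintegral_ge0 => x _; exact: sqr_ge0.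
have m0 : 0 <= m by apply: Rintegral_ge0 => x _; exact: sqr_ge0.
have hb : (eps * a) ^+ 2 <= (eps ^+ 2 * m) * Y.
  by rewrite exprMn -mulrA ler_wpM2l // exprn_ge0 // ltW.
apply/andP; split.
  have := @lower_alg (clow * eps) (eps ^+ 2 * m) Y (eps * a) z nu.
  move=> /(_ (mulr_gt0 cl0 e0) (mulr_ge0 (exprn_ge0 _ (ltW e0)) m0) Y0 hb n0 n1 n2) h.
  apply: (le_trans h); rewrite lerD2r.
  have := ler_wpM2l (ltW e0) W1; nra.
have h1 : eps * W y <= eps * cup * Y.
  have := ler_wpM2l (ltW e0) W2; nra.
have h2 : 2^-1 * (eps * a - z) ^+ 2 <= (eps * a) ^+ 2 + z ^+ 2.
  have := sqr_ge0 (eps * a + z); lra.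
have hz := sqr_ge0 z.
have h3 : (eps * cup + eps ^+ 2 * m) * Y <= N * Y by exact: ler_wpM2r.
have h4 : z ^+ 2 <= N * z ^+ 2 by rewrite -[X in X <= _]mul1r; exact: ler_wpM2r.
lra.
Qed.
End CS.

Theorem lemma2p2 (R : realType) (L c eps clow cup : R) (W : (R -> R) -> R) :
  0 < L -> ~ critical_lengths L -> 0 < eps -> 0 < clow -> 0 < cup ->
  (forall y, inL2 L y -> clow * L2norm2 L y <= W y <= cup * L2norm2 L y) ->
  (forall y z, inL2 L y ->
     nu1_lower L c eps clow * (L2norm2 L y + z ^+ 2) <= V1 L c eps W y z
     <= nu1_upper L c eps cup * (L2norm2 L y + z ^+ 2)) /\
  (exists C : R, 0 < C /\
     forall e : R, 0 < e -> e <= 1 -> forall y z, inL2 L y ->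
       e / C * (L2norm2 L y + z ^+ 2) <= V1 L c e W y z
       <= C * (L2norm2 L y + z ^+ 2)).
Proof.
move=> L0 _ e0 cl0 cu0 HW.
have m0 : 0 <= L2norm2 L (Mfun L c).
  by apply: Rintegral_ge0 => x _; exact: sqr_ge0.
set m := L2norm2 L (Mfun L c) in m0 *.
split.
  move=> y z iy.
  have A0 : 0 < clow * eps by exact: mulr_gt0.
  have P0 : 0 < eps ^+ 2 * m + clow * eps.
    by apply: ltr_wpDl => //; apply: mulr_ge0 => //; exact: exprn_ge0 (ltW e0).
  apply: (@core R L c eps clow cup W y z _ _ L0 e0 cl0 iy (HW y iy)).
  - rewrite /nu1_lower le_min; apply/andP; split.
      by apply: divr_ge0 => //; exact: ltW.
    by apply: mulr_ge0 => //; apply: divr_ge0; exact: ltW.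
  - by rewrite /nu1_lower ge_min lexx.
  - rewrite /nu1_lower -/m.
    set A := clow * eps in A0 P0 *.
    have h : Num.min (A / 2) (2^-1 * (A / (eps ^+ 2 * m + A))) <= 2^-1 * (A / (eps ^+ 2 * m + A)).
      by rewrite ge_min lexx orbT.
    apply: (le_trans (ler_wpM2r (ltW P0) h)).
    rewrite le_eqVlt; apply/orP; left; apply/eqP; field.
    by rewrite gt_eqF.
  - by rewrite /nu1_upper le_max lexx.
  - by rewrite /nu1_upper le_max lexx orbT.
set D := 2 * (m + clow + 1) / clow.
have D0 : 0 <= D by apply: divr_ge0; [lra | exact: ltW].
have clD : clow * D = 2 * (m + clow + 1) by rewrite /D; field; rewrite gt_eqF.
set C := cup + m + 1 + D.
have C0 : 0 < C by rewrite /C; lra.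
have clC : 2 * (m + clow + 1) <= clow * C.
  rewrite -clD; apply: ler_wpM2l; [exact: ltW | rewrite /C; lra].
exists C; split => // e ep e1 y z iy.
set iC := C^-1.
have iC0 : 0 < iC by rewrite /iC invr_gt0.
have CiC : C * iC = 1 by rewrite /iC divff // gt_eqF.
have hh := ler_wpM2r (ltW iC0) clC.
have ee : clow * C * iC = clow by rewrite -mulrA CiC mulr1.
rewrite ee in hh.
have h2 : 2 * iC <= clow.
  have : 2 * iC <= 2 * (m + clow + 1) * iC by nra.
  lra.
have h3 : (m + clow) * iC <= clow / 2 by nra.
apply: (@core R L c e clow cup W y z _ _ L0 ep cl0 iy (HW y iy)).
- by apply: divr_ge0; exact: ltW.
- rewrite -/iC; nra.
- rewrite -/iC -/m.
  have he2 : e ^+ 2 <= e by rewrite expr2 -[X in _ <= X]mulr1; apply: ler_wpM2l; lra.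
  have : e * iC * (e ^+ 2 * m + clow * e) = e * (e * ((e * m + clow) * iC)).
    by rewrite expr2; ring.
  move=> ->.
  have h4 : (e * m + clow) * iC <= clow / 2.
    apply: le_trans h3; apply: ler_wpM2r; [exact: ltW | nra].
  have h5 : 0 <= (e * m + clow) * iC by apply: mulr_ge0; nra.
  nra.
- rewrite /C -/m.
  have : e * cup <= cup by nra.
  have ee1 : e ^+ 2 <= 1 by rewrite expr2; nra.
  have := ler_wpM2r m0 ee1; rewrite mul1r.
  lra.
- rewrite /C; lra.
Qed.
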